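(* Let $\Gamma_2(t)=\mathbb{A}(t)+\varepsilon^*\mathbb{A}^*(t)$ be a differentiable curve in $\mathbb{S}^2_{\mathbb{D}_2}$, $t\in[0,T]$, with $\mathbb{A}=\mathbf a_0+\varepsilon\mathbf a_1$, $\mathbb{A}^*=\mathbf a_2+\varepsilon\mathbf a_3$, and assume $\mathbf a_0'(t)\neq0$ for all $t$. Let $\Phi_2(t,\mathbb{U})=\mathbb{A}\times\mathbb{A}^*+\mathbb{U}\mathbb{A}$ be its corresponding ruled surface in $\mathbb{D}$. Define the arc-length functions $$s_{\Gamma_2}(t)=\int_0^t|\Gamma_2'(\sigma)|\,d\sigma,\qquad s_{\mathbb{A}}(t)=\int_0^t|\mathbb{A}'(\sigma)|\,d\sigma,\qquad s_{\mathbf a_0}(t)=\int_0^t|\mathbf a_0'(\sigma)|\,d\sigma.$$ Then $\Phi_2$ is developable if and only if (i) $s_{\Gamma_2}(t)=s_{\mathbb{A}}(t)$ for all $t$, or (ii) $s_{\Gamma_2}(t)=s_{\mathbf a_0}(t)$ for all $t$ and the real ruled surface $\Phi(t,u)=\mathbf a_0(t)\times\mathbf a_1(t)+u\,\mathbf a_0(t)$ in $\mathbb{R}^3$ is developable.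
   Context: Dual numbers $D=\{a+\varepsilon a^*\}$, $\varepsilon^2=0$, $\varepsilon\ne0$. Dual vectors $\mathbb{D}=\{\mathbf a+\varepsilon\mathbf a^*:\mathbf a,\mathbf a^*\in\mathbb{R}^3\}$ with $D$-valued inner product $\langle\mathbf a+\varepsilon\mathbf a^*,\mathbf b+\varepsilon\mathbf b^*\rangle=\mathbf a\cdot\mathbf b+\varepsilon(\mathbf a^*\cdot\mathbf b+\mathbf a\cdot\mathbf b^* )$, cross product $(\mathbf a+\varepsilon\mathbf a^* )\times(\mathbf b+\varepsilon\mathbf b^* )=\mathbf a\times\mathbf b+\varepsilon(\mathbf a\times\mathbf b^*+\mathbf a^*\times\mathbf b)$, dual determinant $\det(X,Y,Z)=\langle X,Y\times Z\rangle$, and norm (for $\mathbf a\neq0$) $|\mathbf a+\varepsilon\mathbf a^*|=|\mathbf a|+\varepsilon\frac{\mathbf a\cdot\mathbf a^*}{|\mathbf a|}$. Hyper-dual vectors $\mathbb{D}_2=\{\mathbb{A}+\varepsilon^*\mathbb{A}^*\}$ with $\varepsilon^{*2}=0$, $\varepsilon\varepsilon^*=\varepsilon^*\varepsilon\ne0$, $(\varepsilon\varepsilon^* )^2=0$; inner product $\langle\mathbb{A}+\varepsilon^*\mathbb{A}^*,\mathbb{B}+\varepsilon^*\mathbb{B}^*\rangle_2=\langle\mathbb{A},\mathbb{B}\rangle+\varepsilon^*(\langle\mathbb{A},\mathbb{B}^*\rangle+\langle\mathbb{A}^*,\mathbb{B}\rangle)$; norm (when the real part of $\mathbb{A}$ is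 nonzero) $|\mathbb{A}+\varepsilon^*\mathbb{A}^*|=|\mathbb{A}|+\varepsilon^*\frac{\langle\mathbb{A},\mathbb{A}^*\rangle}{|\mathbb{A}|}$ (division by an invertible dual number). Unit hyper-dual sphere $\mathbb{S}^2_{\mathbb{D}_2}=\{\mathbb{A}+\varepsilon^*\mathbb{A}^*:\langle\mathbb{A},\mathbb{A}\rangle=1,\langle\mathbb{A},\mathbb{A}^*\rangle=0\}$. Derivatives and integrals of dual/hyper-dual valued functions are taken componentwise. A ruled surface $\mathbb{B}(t)+\mathbb{U}\mathbb{B}^*(t)$ in $\mathbb{D}$ ($\mathbb{U}\in D$) is developable if $\det(\mathbb{B}',\mathbb{B}^*,\mathbb{B}^{*\prime})=0$ for all $t$; a real ruled surface $\beta(t)+u\alpha(t)$ in $\mathbb{R}^3$ is developable if $\det(\beta'(t),\alpha(t),\alpha'(t))=0$ for all $t$. *)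

(* Defs.v *)
From Stdlib Require Import Reals.
From Coquelicot Require Import Coquelicot.
Open Scope R_scope.

Record vec3 := V3 { v1 : R; v2 : R; v3 : R }.
Definition vzero : vec3 := V3 0 0 0.
Definition dot (a b : vec3) : R := v1 a * v1 b + v2 a * v2 b + v3 a * v3 b.
Definition cross (a b : vec3) : vec3 :=
  V3 (v2 a * v3 b - v3 a * v2 b) (v3 a * v1 b - v1 a * v3 b) (v1 a * v2 b - v2 a * v1 b).
Definition vnorm (a : vec3) : R := sqrt (dot a a).
Definition det3 (a b c : vec3) : R := dot a (cross b c).

(** Dual numbers a + eps a_star *)
Record dnum := DN { dre : R; ddu : R }.
Definition d_of_r (r : R) : dnum := DN r 0.
(** division by an invertible dual number (real part nonzero):
    (a + eps as)/(b + eps bs) = a/b + eps (as b - a bs)/b^2 *)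
Definition ddiv (x y : dnum) : dnum :=
  DN (dre x / dre y) ((ddu x * dre y - dre x * ddu y) / (dre y ^ 2)).

Record dvec := DV { dvre : vec3; dvdu : vec3 }.
Definition dinner (X Y : dvec) : dnum :=
  DN (dot (dvre X) (dvre Y)) (dot (dvdu X) (dvre Y) + dot (dvre X) (dvdu Y)).
Definition dvadd (a b : vec3) : vec3 := V3 (v1 a + v1 b) (v2 a + v2 b) (v3 a + v3 b).
Definition dcross (X Y : dvec) : dvec :=
  DV (cross (dvre X) (dvre Y)) (dvadd (cross (dvre X) (dvdu Y)) (cross (dvdu X) (dvre Y))).
Definition ddet (X Y Z : dvec) : dnum := dinner X (dcross Y Z).
(** norm |a + eps as| = |a| + eps (a.as)/|a|  (meaningful for a <> 0) *)
Definition dvnorm (X : dvec) : dnum :=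
  DN (vnorm (dvre X)) (dot (dvre X) (dvdu X) / vnorm (dvre X)).

(** Hyper-dual numbers and vectors  A + eps2 As *)
Record hdnum := HN { hre : dnum; hdu : dnum }.
Definition h_of_d (x : dnum) : hdnum := HN x (DN 0 0).
Record hdvec := HV { hvre : dvec; hvdu : dvec }.
Definition hnorm (X : hdvec) : hdnum :=
  HN (dvnorm (hvre X)) (ddiv (dinner (hvre X) (hvdu X)) (dvnorm (hvre X))).
Definition in_hsphere (X : hdvec) : Prop :=
  dinner (hvre X) (hvre X) = DN 1 0 /\ dinner (hvre X) (hvdu X) = DN 0 0.

Definition vderiv (f : R -> vec3) (t : R) : vec3 :=
  V3 (Derive (fun s => v1 (f s)) t) (Derive (fun s => v2 (f s)) t) (Derive (fun s => v3 (f s)) t).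
Definition dvderiv (f : R -> dvec) (t : R) : dvec :=
  DV (vderiv (fun s => dvre (f s)) t) (vderiv (fun s => dvdu (f s)) t).
Definition hvderiv (f : R -> hdvec) (t : R) : hdvec :=
  HV (dvderiv (fun s => hvre (f s)) t) (dvderiv (fun s => hvdu (f s)) t).

Definition dint (f : R -> dnum) (a b : R) : dnum :=
  DN (RInt (fun s => dre (f s)) a b) (RInt (fun s => ddu (f s)) a b).
Definition hint (f : R -> hdnum) (a b : R) : hdnum :=
  HN (dint (fun s => hre (f s)) a b) (dint (fun s => hdu (f s)) a b).

Definition C1_on (g : R -> R) (T : R) : Prop :=
  forall t, 0 <= t <= T -> ex_derive g t /\ continuous (Derive g) t.
Definition vC1_on (f : R -> vec3) (T : R) : Prop :=
  C1_on (fun s => v1 (f s)) T /\ C1_on (fun s => v2 (f s)) T /\ C1_on (fun s => v3 (f s)) T.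
Definition dvC1_on (f : R -> dvec) (T : R) : Prop :=
  vC1_on (fun s => dvre (f s)) T /\ vC1_on (fun s => dvdu (f s)) T.
Definition hvC1_on (f : R -> hdvec) (T : R) : Prop :=
  dvC1_on (fun s => hvre (f s)) T /\ dvC1_on (fun s => hvdu (f s)) T.

(** dual ruled surface B(t) + U B*(t) *)
Definition dual_ruled_surface (B Bs : R -> dvec) (t : R) (U : dnum) : dvec :=
  DV (dvadd (dvre (B t)) (V3 (dre U * v1 (dvre (Bs t))) (dre U * v2 (dvre (Bs t))) (dre U * v3 (dvre (Bs t)))))
     (dvadd (dvdu (B t))
        (dvadd (V3 (dre U * v1 (dvdu (Bs t))) (dre U * v2 (dvdu (Bs t))) (dre U * v3 (dvdu (Bs t))))
               (V3 (ddu U * v1 (dvre (Bs t))) (ddu U * v2 (dvre (Bs t))) (ddu U * v3 (dvre (Bs t)))))).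
Definition dual_developable (B Bs : R -> dvec) (T : R) : Prop :=
  forall t, 0 <= t <= T -> ddet (dvderiv B t) (Bs t) (dvderiv Bs t) = DN 0 0.
(** real ruled surface beta(t) + u alpha(t) *)
Definition real_developable (beta alpha : R -> vec3) (T : R) : Prop :=
  forall t, 0 <= t <= T -> det3 (vderiv beta t) (alpha t) (vderiv alpha t) = 0.

(* Main.v *)
Require Import Defs.
From Stdlib Require Import Reals Lra.
From Coquelicot Require Import Coquelicot.
Open Scope R_scope.

Definition vis (f : R -> vec3) t (v : vec3) :=
  is_derive (fun s => v1 (f s)) t (v1 v) /\ is_derive (fun s => v2 (f s)) t (v2 v) /\
  is_derive (fun s => v3 (f s)) t (v3 v).
Definition vex (f : R -> vec3) t :=
  ex_derive (fun s => v1 (f s)) t /\ ex_derive (fun s => v2 (f s)) t /\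
  ex_derive (fun s => v3 (f s)) t.

Lemma vis_vderiv f t v : vis f t v -> vderiv f t = v.
Proof.
  intros [H1 [H2 H3]]; destruct v; unfold vderiv; simpl in *.
  f_equal; apply is_derive_unique; assumption.
Qed.

Lemma vex_vis f t : vex f t -> vis f t (vderiv f t).
Proof. intros [H1 [H2 H3]]; split; [|split]; apply Derive_correct; assumption. Qed.

Lemma der_val (f : R -> R) t l l' : is_derive f t l -> l = l' -> is_derive f t l'.
Proof. intros H ->; exact H. Qed.

Lemma der_mult (f g : R -> R) t df dg : is_derive f t df -> is_derive g t dg ->
  is_derive (fun s => f s * g s) t (df * g t + f t * dg).
Proof. apply Derive.is_derive_mult. Qed.
Lemma der_plus (f g : R -> R) t df dg : is_derive f t df -> is_derive g t dg ->
  is_derive (fun s => f s + g s) t (df + dg).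
Proof. intros; apply (is_derive_plus f g); assumption. Qed.
Lemma der_minus (f g : R -> R) t df dg : is_derive f t df -> is_derive g t dg ->
  is_derive (fun s => f s - g s) t (df - dg).
Proof. intros; apply (is_derive_minus f g); assumption. Qed.

Lemma vis_cross f g t u v : vis f t u -> vis g t v ->
  vis (fun s => cross (f s) (g s)) t (dvadd (cross u (g t)) (cross (f t) v)).
Proof.
  intros [F1 [F2 F3]] [G1 [G2 G3]]; unfold vis, cross, dvadd; simpl.
  split; [|split].
  - eapply der_val; [apply der_minus; [apply (der_mult _ _ _ _ _ F2 G3)|apply (der_mult _ _ _ _ _ F3 G2)]|simpl; ring].
  - eapply der_val; [apply der_minus; [apply (der_mult _ _ _ _ _ F3 G1)|apply (der_mult _ _ _ _ _ F1 G3)]|simpl; ring].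
  - eapply der_val; [apply der_minus; [apply (der_mult _ _ _ _ _ F1 G2)|apply (der_mult _ _ _ _ _ F2 G1)]|simpl; ring].
Qed.

Lemma vis_add f g t u v : vis f t u -> vis g t v ->
  vis (fun s => dvadd (f s) (g s)) t (dvadd u v).
Proof.
  intros [F1 [F2 F3]] [G1 [G2 G3]]; unfold vis, dvadd; simpl.
  split; [|split]; apply der_plus; assumption.
Qed.

Lemma dot_is f g t u v : vis f t u -> vis g t v ->
  is_derive (fun s => dot (f s) (g s)) t (dot u (g t) + dot (f t) v).
Proof.
  intros [F1 [F2 F3]] [G1 [G2 G3]]; unfold dot.
  eapply der_val; [apply der_plus; [apply der_plus|]; [apply (der_mult _ _ _ _ _ F1 G1)|apply (der_mult _ _ _ _ _ F2 G2)|apply (der_mult _ _ _ _ _ F3 G3)]|simpl; ring].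
Qed.

Lemma dot_comm a b : dot a b = dot b a.
Proof. unfold dot; ring. Qed.

Lemma deriv_const_int h T t d c : 0 < T -> 0 <= t <= T ->
  (forall s, 0 <= s <= T -> h s = c) -> is_derive h t d -> d = 0.
Proof.
  intros HT Ht Hc Hd. apply is_derive_Reals in Hd.
  destruct (Req_dec d 0) as [|Hne]; [assumption|exfalso].
  destruct (Hd (Rabs d) (Rabs_pos_lt _ Hne)) as [delta Hdel].
  assert (Hq : forall hh, hh <> 0 -> Rabs hh < delta -> 0 <= t + hh <= T -> False).
  { intros hh H0 H1 H2. specialize (Hdel hh H0 H1).
    rewrite (Hc _ H2), (Hc _ Ht) in Hdel.
    replace ((c - c) / hh - d) with (- d) in Hdel by (field; auto).
    rewrite Rabs_Ropp in Hdel; lra. }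
  pose proof (cond_pos delta) as Hdp.
  destruct (Rlt_dec t T) as [Hlt|Hge].
  - set (m := Rmin (delta/2) (T - t)).
    assert (0 < m) by (apply Rmin_pos; lra).
    assert (m <= delta/2) by apply Rmin_l.
    assert (m <= T - t) by apply Rmin_r.
    apply (Hq m); [lra| rewrite Rabs_pos_eq; lra | lra].
  - set (m := Rmin (delta/2) T).
    assert (0 < m) by (apply Rmin_pos; lra).
    assert (m <= delta/2) by apply Rmin_l.
    assert (m <= T) by apply Rmin_r.
    apply (Hq (- m)); [lra| rewrite Rabs_Ropp, Rabs_pos_eq; lra | lra].
Qed.

Lemma key (a0 a1 a2 a3 b0 b1 b2 b3 : vec3) :
  dot a0 a0 = 1 -> dot a1 a0 + dot a0 a1 = 0 ->
  dot a0 a2 = 0 -> dot a1 a2 + dot a0 a3 = 0 ->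
  dot b0 a0 = 0 -> dot b1 a0 + dot b0 a1 = 0 ->
  ddet (DV (dvadd (cross b0 a2) (cross a0 b2))
           (dvadd (dvadd (cross b0 a3) (cross a0 b3)) (dvadd (cross b1 a2) (cross a1 b2))))
       (DV a0 a1) (DV b0 b1) = dinner (DV b0 b1) (DV b2 b3).
Proof.
  intros Hm0 Hm1 Hs0 Hs1 Hp0 Hp1.
  assert (E1 : dre (ddet (DV (dvadd (cross b0 a2) (cross a0 b2))
           (dvadd (dvadd (cross b0 a3) (cross a0 b3)) (dvadd (cross b1 a2) (cross a1 b2))))
       (DV a0 a1) (DV b0 b1)) = dot b0 b2 + dot b0 a0 * dot a2 b0 - dot b0 b0 * dot a0 a2
        + (dot a0 a0 - 1) * dot b2 b0 - dot b0 a0 * dot b2 a0).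
  { destruct a0, a1, a2, a3, b0, b1, b2, b3; unfold ddet, dinner, dcross, cross, dvadd, dot; simpl; ring. }
  assert (E2 : ddu (ddet (DV (dvadd (cross b0 a2) (cross a0 b2))
           (dvadd (dvadd (cross b0 a3) (cross a0 b3)) (dvadd (cross b1 a2) (cross a1 b2))))
       (DV a0 a1) (DV b0 b1)) = (dot b1 b2 + dot b0 b3)
        + dot b0 a0 * (dot a3 b0 + dot a2 b1) + (dot b1 a0 + dot b0 a1) * dot a2 b0
        - dot b0 b0 * (dot a1 a2 + dot a0 a3) - (dot b1 b0 + dot b0 b1) * dot a0 a2
        + (dot a0 a0 - 1) * (dot b3 b0 + dot b2 b1) + (dot a1 a0 + dot a0 a1) * dot b2 b0
        - dot b0 a0 * (dot b3 a0 + dot b2 a1) - (dot b1 a0 + dot b0 a1) * dot b2 a0).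
  { destruct a0, a1, a2, a3, b0, b1, b2, b3; unfold ddet, dinner, dcross, cross, dvadd, dot; simpl; ring. }
  rewrite Hm0, Hs0, Hp0 in E1; rewrite Hm0, Hm1, Hs0, Hs1, Hp0, Hp1 in E2.
  destruct (ddet _ _ _) as [x y]; simpl in E1, E2; unfold dinner; simpl.
  f_equal; lra.
Qed.

Definition vcont (F : R -> vec3) t :=
  continuous (fun s => v1 (F s)) t /\ continuous (fun s => v2 (F s)) t /\
  continuous (fun s => v3 (F s)) t.

Lemma c_mult (f g : R -> R) t : continuous f t -> continuous g t -> continuous (fun s => f s * g s) t.
Proof. intros; apply (continuous_mult f g); assumption. Qed.
Lemma c_plus (f g : R -> R) t : continuous f t -> continuous g t -> continuous (fun s => f s + g s) t.
Proof. intros; apply (continuous_plus f g); assumption. Qed.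
Lemma c_minus (f g : R -> R) t : continuous f t -> continuous g t -> continuous (fun s => f s - g s) t.
Proof. intros; apply (continuous_minus f g); assumption. Qed.
Lemma c_div (f g : R -> R) t : continuous f t -> continuous g t -> g t <> 0 ->
  continuous (fun s => f s / g s) t.
Proof. intros; apply c_mult; [assumption|]. apply continuous_Rinv_comp; assumption. Qed.
Lemma c_pow2 (f : R -> R) t : continuous f t -> continuous (fun s => f s ^ 2) t.
Proof.
  intros H. apply (continuous_ext (fun s => f s * f s)); [intros; simpl; ring|].
  apply c_mult; assumption.
Qed.

Lemma dot_cont F G t : vcont F t -> vcont G t -> continuous (fun s => dot (F s) (G s)) t.
Proof.
  intros [F1 [F2 F3]] [G1 [G2 G3]]; unfold dot.
  apply c_plus; [apply c_plus|]; apply c_mult; assumption.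
Qed.

Lemma vnorm_cont F t : vcont F t -> continuous (fun s => vnorm (F s)) t.
Proof. intros H; unfold vnorm; apply continuous_sqrt_comp, dot_cont; assumption. Qed.

Lemma vnorm_pos a : a <> vzero -> 0 < vnorm a.
Proof.
  intros H; unfold vnorm; apply sqrt_lt_R0. destruct a as [x y z]; unfold dot; simpl.
  destruct (Req_dec x 0); [destruct (Req_dec y 0); [destruct (Req_dec z 0)|]|].
  - subst; exfalso; apply H; reflexivity.
  - nra.
  - nra.
  - nra.
Qed.

Lemma ddiv_zero x y : 0 < dre y -> ddiv x y = DN 0 0 -> x = DN 0 0.
Proof.
  destruct x as [x0 x1], y as [y0 y1]; unfold ddiv; simpl; intros Hy H.
  injection H; intros H2 H1.
  assert (x0 = 0).
  { replace x0 with (x0 / y0 * y0) by (field; lra). rewrite H1; ring. }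
  subst x0. f_equal.
  replace x1 with ((x1 * y0 - 0 * y1) / (y0 * (y0 * 1)) * y0) by (field; lra). rewrite H2; ring.
Qed.

Lemma ddiv_zero' x y : x = DN 0 0 -> ddiv x y = DN 0 0.
Proof. intros ->; unfold ddiv; simpl; f_equal; unfold Rdiv; ring. Qed.

Lemma int_zero (g : R -> R) T : 0 < T -> (forall t, 0 <= t <= T -> continuous g t) ->
  (forall t, 0 <= t <= T -> RInt g 0 t = 0) -> forall t, 0 <= t <= T -> g t = 0.
Proof.
  intros HT Hc Hi t Ht.
  destruct (Req_dec (g t) 0) as [|Hne]; [assumption|exfalso].
  assert (He : 0 < Rabs (g t) / 2) by (apply Rabs_pos_lt in Hne; lra).
  pose proof (proj1 (filterlim_locally g (g t)) (Hc t Ht) (mkposreal _ He)) as Hl.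
  destruct Hl as [delta Hd]. pose proof (cond_pos delta) as Hdp.
  set (a := Rmax 0 (t - delta/2)). set (b := Rmin T (t + delta/2)).
  assert (Ha1 : 0 <= a) by apply Rmax_l.
  assert (Ha2 : t - delta/2 <= a) by apply Rmax_r.
  assert (Ha3 : a <= t) by (apply Rmax_lub; lra).
  assert (Hb1 : b <= T) by apply Rmin_l.
  assert (Hb2 : b <= t + delta/2) by apply Rmin_r.
  assert (Hb3 : t <= b) by (apply Rmin_glb; lra).
  assert (Hab : a < b).
  { unfold a, b, Rmax, Rmin.
    destruct (Rle_dec 0 (t - delta/2)); destruct (Rle_dec T (t + delta/2)); lra. }
  assert (Hclose : forall x, a <= x <= b -> Rabs (g x - g t) < Rabs (g t) / 2).
  { intros x Hx. apply (Hd x). unfold ball; simpl; unfold AbsRing_ball; simpl.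
    unfold abs, minus, plus, opp; simpl. apply Rabs_def1; lra. }
  assert (Hex : forall u v, 0 <= u <= T -> 0 <= v <= T -> ex_RInt g u v).
  { intros u v Hu Hv. apply (@ex_RInt_continuous R_CompleteNormedModule). intros z Hz. apply Hc.
    split.
    - eapply Rle_trans; [|apply Hz]. apply Rmin_glb; lra.
    - eapply Rle_trans; [apply Hz|]. apply Rmax_lub; lra. }
  assert (Hab0 : RInt g a b = 0).
  { pose proof (RInt_Chasles g 0 a b (Hex 0 a ltac:(lra) ltac:(lra)) (Hex a b ltac:(lra) ltac:(lra))) as C.
    rewrite (Hi a ltac:(lra)), (Hi b ltac:(lra)) in C. simpl in C.
    unfold plus in C; simpl in C. lra. }
  destruct (Rle_lt_dec 0 (g t)) as [Hpos|Hneg].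
  - assert (Hgt : 0 < g t) by lra. rewrite Rabs_pos_eq in Hclose by lra.
    assert (L : RInt (fun _ => g t / 2) a b <= RInt g a b).
    { apply RInt_le; [lra| apply ex_RInt_const | apply Hex; lra |].
      intros x Hx. specialize (Hclose x ltac:(lra)). apply Rabs_def2 in Hclose. lra. }
    rewrite RInt_const, Hab0 in L. unfold scal in L; simpl in L; unfold mult in L; simpl in L.
    assert (0 < (b - a) * (g t / 2)) by (apply Rmult_lt_0_compat; lra). lra.
  - rewrite Rabs_left in Hclose by lra.
    assert (L : RInt g a b <= RInt (fun _ => g t / 2) a b).
    { apply RInt_le; [lra| apply Hex; lra | apply ex_RInt_const |].
      intros x Hx. specialize (Hclose x ltac:(lra)). apply Rabs_def2 in Hclose. lra. }
    rewrite RInt_const, Hab0 in L. unfold scal in L; simpl in L; unfold mult in L; simpl in L.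
    assert ((b - a) * (g t / 2) < 0).
    { apply Rmult_pos_neg; lra. }
    lra.
Qed.

Lemma int_zero' (g : R -> R) t : 0 <= t -> (forall s, 0 <= s <= t -> g s = 0) -> RInt g 0 t = 0.
Proof.
  intros Ht H. rewrite (RInt_ext g (fun _ => 0)).
  - rewrite RInt_const. unfold scal; simpl; unfold mult; simpl; ring.
  - intros x Hx. rewrite Rmin_left, Rmax_right in Hx by lra. apply H; lra.
Qed.

Lemma from_C1 f T t : vC1_on f T -> 0 <= t <= T -> vex f t /\ vcont (vderiv f) t.
Proof.
  intros [H1 [H2 H3]] Ht.
  destruct (H1 t Ht), (H2 t Ht), (H3 t Ht).
  split; split; try split; assumption.
Qed.

Lemma dn_zero d : dre d = 0 -> ddu d = 0 -> d = DN 0 0.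
Proof. destruct d; simpl; intros -> ->; reflexivity. Qed.

Theorem corollary2 (T : R) (Gamma2 : R -> hdvec) :
  let A  : R -> dvec := fun t => hvre (Gamma2 t) in
  let As : R -> dvec := fun t => hvdu (Gamma2 t) in
  let a0 : R -> vec3 := fun t => dvre (A t) in
  let a1 : R -> vec3 := fun t => dvdu (A t) in
  let s_Gamma2 : R -> hdnum := fun t => hint (fun s => hnorm (hvderiv Gamma2 s)) 0 t in
  let s_A : R -> dnum := fun t => dint (fun s => dvnorm (dvderiv A s)) 0 t in
  let s_a0 : R -> R := fun t => RInt (fun s => vnorm (vderiv a0 s)) 0 t in
  0 < T ->
  hvC1_on Gamma2 T ->
  (forall t, 0 <= t <= T -> in_hsphere (Gamma2 t)) ->
  (forall t, 0 <= t <= T -> vderiv a0 t <> vzero) ->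
  (dual_developable (fun t => dcross (A t) (As t)) A T <->
     (forall t, 0 <= t <= T -> s_Gamma2 t = h_of_d (s_A t)) \/
     ((forall t, 0 <= t <= T -> s_Gamma2 t = h_of_d (d_of_r (s_a0 t))) /\
      real_developable (fun t => cross (a0 t) (a1 t)) a0 T)).
Proof.
  intros A As a0 a1 sG sA sa0 HT HC1 Hsph Hnz.
  set (a2 := fun t => dvre (As t)). set (a3 := fun t => dvdu (As t)).
  destruct HC1 as [[C0 C1] [C2 C3]].
  assert (Sph : forall s, 0 <= s <= T ->
    dot (a0 s) (a0 s) = 1 /\ dot (a1 s) (a0 s) + dot (a0 s) (a1 s) = 0 /\
    dot (a0 s) (a2 s) = 0 /\ dot (a1 s) (a2 s) + dot (a0 s) (a3 s) = 0).
  { intros s Hs. destruct (Hsph s Hs) as [E1 E2]. unfold dinner in E1, E2.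
    injection E1; injection E2; intros; repeat split; assumption. }
  assert (P : forall t, 0 <= t <= T ->
    ddet (dvderiv (fun t => dcross (A t) (As t)) t) (A t) (dvderiv A t)
    = dinner (dvderiv A t) (dvderiv As t)).
  { intros t Ht.
    pose proof (vex_vis _ _ (proj1 (from_C1 _ _ _ C0 Ht))) as V0.
    pose proof (vex_vis _ _ (proj1 (from_C1 _ _ _ C1 Ht))) as V1.
    pose proof (vex_vis _ _ (proj1 (from_C1 _ _ _ C2 Ht))) as V2.
    pose proof (vex_vis _ _ (proj1 (from_C1 _ _ _ C3 Ht))) as V3.
    assert (Hder : dvderiv (fun t => dcross (A t) (As t)) t =
      DV (dvadd (cross (vderiv a0 t) (a2 t)) (cross (a0 t) (vderiv a2 t)))
         (dvadd (dvadd (cross (vderiv a0 t) (a3 t)) (cross (a0 t) (vderiv a3 t)))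
                (dvadd (cross (vderiv a1 t) (a2 t)) (cross (a1 t) (vderiv a2 t))))).
    { unfold dvderiv; f_equal; apply vis_vderiv.
      - exact (vis_cross _ _ _ _ _ V0 V2).
      - exact (vis_add _ _ _ _ _ (vis_cross _ _ _ _ _ V0 V3) (vis_cross _ _ _ _ _ V1 V2)). }
    rewrite Hder.
    replace (A t) with (DV (a0 t) (a1 t)) by (unfold a0, a1; destruct (A t); reflexivity).
    change (dvderiv A t) with (DV (vderiv a0 t) (vderiv a1 t)).
    change (dvderiv As t) with (DV (vderiv a2 t) (vderiv a3 t)).
    destruct (Sph t Ht) as [Hm0 [Hm1 [Hs0 Hs1]]].
    assert (Dd0 : dot (vderiv a0 t) (a0 t) + dot (a0 t) (vderiv a0 t) = 0).
    { eapply (deriv_const_int (fun s => dot (a0 s) (a0 s)) T t _ 1 HT Ht).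
      - intros s Hs; apply (Sph s Hs).
      - exact (dot_is _ _ _ _ _ V0 V0). }
    assert (Dd1 : dot (vderiv a1 t) (a0 t) + dot (a1 t) (vderiv a0 t)
                  + (dot (vderiv a0 t) (a1 t) + dot (a0 t) (vderiv a1 t)) = 0).
    { eapply (deriv_const_int (fun s => dot (a1 s) (a0 s) + dot (a0 s) (a1 s)) T t _ 0 HT Ht).
      - intros s Hs; apply (Sph s Hs).
      - exact (der_plus _ _ _ _ _ (dot_is _ _ _ _ _ V1 V0) (dot_is _ _ _ _ _ V0 V1)). }
    apply key; try assumption.
    - rewrite (dot_comm (a0 t)) in Dd0; lra.
    - rewrite (dot_comm (a1 t)), (dot_comm (a0 t) (vderiv a1 t)) in Dd1; lra. }
  split.
  - intro Hdev. left. intros t Ht. unfold sG, h_of_d, hint. f_equal.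
    unfold dint; f_equal; apply int_zero'; try lra; intros s Hs;
    (assert (Hz : hdu (hnorm (hvderiv Gamma2 s)) = DN 0 0);
     [ apply ddiv_zero'; change (dinner (dvderiv A s) (dvderiv As s) = DN 0 0); rewrite <- (P s ltac:(lra)); apply Hdev; lra
     | rewrite Hz; reflexivity ]).
  - intro Hor.
    assert (Hdu : forall t, 0 <= t <= T ->
              dint (fun s => hdu (hnorm (hvderiv Gamma2 s))) 0 t = DN 0 0).
    { intros t Ht. destruct Hor as [H|[H _]]; specialize (H t Ht);
      apply (f_equal hdu) in H; exact H. }
    assert (Cv : forall t, 0 <= t <= T ->
      vcont (vderiv a0) t /\ vcont (vderiv a1) t /\ vcont (vderiv a2) t /\ vcont (vderiv a3) t).
    { intros t Ht. split; [|split; [|split]];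
      [exact (proj2 (from_C1 _ _ _ C0 Ht)) | exact (proj2 (from_C1 _ _ _ C1 Ht))
      |exact (proj2 (from_C1 _ _ _ C2 Ht)) | exact (proj2 (from_C1 _ _ _ C3 Ht))]. }
    assert (Gre : forall t, 0 <= t <= T -> dre (hdu (hnorm (hvderiv Gamma2 t))) = 0).
    { apply (int_zero (fun s => dre (hdu (hnorm (hvderiv Gamma2 s)))) T HT).
      - intros t Ht. destruct (Cv t Ht) as [K0 [K1 [K2 K3]]].
        pose proof (vnorm_pos _ (Hnz t Ht)).
        assert (Hc : continuous (fun s => dot (vderiv a0 s) (vderiv a2 s) / vnorm (vderiv a0 s)) t).
        { apply c_div; [apply dot_cont; assumption| apply vnorm_cont; assumption| lra]. }
        exact Hc.
      - intros t Ht. exact (f_equal dre (Hdu t Ht)). }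
    assert (Gdu : forall t, 0 <= t <= T -> ddu (hdu (hnorm (hvderiv Gamma2 t))) = 0).
    { apply (int_zero (fun s => ddu (hdu (hnorm (hvderiv Gamma2 s)))) T HT).
      - intros t Ht. destruct (Cv t Ht) as [K0 [K1 [K2 K3]]].
        pose proof (vnorm_pos _ (Hnz t Ht)).
        assert (Hc : continuous (fun s =>
          ((dot (vderiv a1 s) (vderiv a2 s) + dot (vderiv a0 s) (vderiv a3 s)) * vnorm (vderiv a0 s)
           - dot (vderiv a0 s) (vderiv a2 s) * (dot (vderiv a0 s) (vderiv a1 s) / vnorm (vderiv a0 s)))
          / (vnorm (vderiv a0 s) ^ 2)) t).
        { apply c_div.
          - apply c_minus; apply c_mult.
            + apply c_plus; apply dot_cont; assumption.
            + apply vnorm_cont; assumption.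
            + apply dot_cont; assumption.
            + apply c_div; [apply dot_cont; assumption| apply vnorm_cont; assumption| lra].
          - apply c_pow2, vnorm_cont; assumption.
          - apply pow_nonzero; lra. }
        exact Hc.
      - intros t Ht. exact (f_equal ddu (Hdu t Ht)). }
    intros t Ht. rewrite P by lra.
    apply (ddiv_zero _ (dvnorm (dvderiv A t))).
    + exact (vnorm_pos _ (Hnz t Ht)).
    + exact (dn_zero _ (Gre t Ht) (Gdu t Ht)).
Qed.
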